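(* For all $x^0\in\mathcal{F}(\mathcal{T},\mathbb{R})$ and $x^\uparrow,x^\downarrow\in\mathcal{F}(\mathcal{T},\mathbb{R}_+)$, the following equivalences hold. (i) $x(x^0(t),x^\uparrow(t),x^\downarrow(t),\xi(t))\le\bar x$ for all $\xi\in\Xi$ and all $t\in\mathcal{T}$ if and only if $x^0_k+x^\uparrow_k\le\bar x$ for all $k\in\mathcal{K}$. (ii) $x(x^0(t),x^\uparrow(t),x^\downarrow(t),\xi(t))\ge\underline{x}$ for all $\xi\in\Xi$ and all $t\in\mathcal{T}$ if and only if $x^0_k-x^\downarrow_k\ge\underline{x}$ for all $k\in\mathcal{K}$.
   Context: Fix a positive integer $K$, $\Delta t>0$, $T=K\Delta t$, $\mathcal{T}=[0,T]$ and $\mathcal{K}=\{1,\dots,K\}$. Let $\mathcal{T}_k=[(k-1)\Delta t,k\Delta t)$ for $k<K$ and $\mathcal{T}_K=[T-\Delta t,T]$. For $U\subseteq\mathbb{R}$, $\mathcal{F}(\mathcal{T},U)$ is the set of functions $\mathcal{T}\to U$ that are constant on each $\mathcal{T}_k$, and $\mathcal{R}(\mathcal{T},U)$ is the set of Riemann integrable functions $\mathcal{T}\to U$. For $f\in\mathcal{F}(\mathcal{T},U)$, $f_k$ denotes the value of $f$ on $\mathcal{T}_k$. Write $[z]^+=\max\{z,0\}$ and $[z]^-=\max\{-z,0\}$. Let $\underline{x}\le 0\le\bar x$ and $\gamma\in[0,T]$. The power output is $x(a,b,c,s)=a+[s]^+b-[s]^-c$. The uncertainty set is $\Xi=\{\xi\in\mathcal{R}(\mathcal{T},[-1,1]):\int_{\mathcal{T}}|\xi(t)|\,dt\le\gamma\}$.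 *)

(* Defs.v *)
From Stdlib Require Import Reals.
From Coquelicot Require Import Coquelicot.
Open Scope R_scope.

Definition pos_part (z : R) : R := Rmax z 0.
Definition neg_part (z : R) : R := Rmax (- z) 0.

Definition power_output (a b c s : R) : R :=
  a + pos_part s * b - neg_part s * c.

Definition in_period (K : nat) (dt : R) (k : nat) (t : R) : Prop :=
  if (k <? K)%nat
  then INR (k - 1) * dt <= t < INR k * dt
  else INR K * dt - dt <= t <= INR K * dt.

(* f in F(T,U): f maps T = [0, K dt] into U and is constant on each T_k *)
Definition piecewise_const (K : nat) (dt : R) (U : R -> Prop) (f : R -> R) : Prop :=
  (forall t, 0 <= t <= INR K * dt -> U (f t)) /\
  (forall k, (1 <= k <= K)%nat ->
     forall s t, in_period K dt k s -> in_period K dt k t -> f s = f t).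

(* f_k : value of f on T_k (its left endpoint (k-1) dt lies in T_k) *)
Definition val_k (dt : R) (f : R -> R) (k : nat) : R := f (INR (k - 1) * dt).

Definition in_Xi (T gamma : R) (xi : R -> R) : Prop :=
  (forall t, 0 <= t <= T -> -1 <= xi t <= 1) /\
  ex_RInt xi 0 T /\
  RInt (fun t => Rabs (xi t)) 0 T <= gamma.

(* Main.v *)
Require Import Defs.
From Stdlib Require Import Reals Lra Lia.
From Coquelicot Require Import Coquelicot.
Open Scope R_scope.

Lemma zero_int (a b : R) : is_RInt (fun _ => 0) a b 0.
Proof.
  pose proof (@is_RInt_const R_NormedModule a b 0) as H.
  match type of H with is_RInt _ _ _ ?v => replace v with 0 in H end.
  exact H. unfold scal; simpl; unfold mult; simpl; ring.
Qed.

Lemma point_int (f : R -> R) (t0 T : R) :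
  (forall t, t <> t0 -> f t = 0) -> 0 <= t0 <= T -> is_RInt f 0 T 0.
Proof.
  intros Hf Ht.
  assert (H1 : is_RInt f 0 t0 0).
  { apply (is_RInt_ext (fun _ => 0)); [|apply zero_int].
    intros x Hx. rewrite Hf; auto. unfold Rmin, Rmax in Hx.
    destruct (Rle_dec 0 t0); lra. }
  assert (H2 : is_RInt f t0 T 0).
  { apply (is_RInt_ext (fun _ => 0)); [|apply zero_int].
    intros x Hx. rewrite Hf; auto. unfold Rmin, Rmax in Hx.
    destruct (Rle_dec t0 T); lra. }
  pose proof (is_RInt_Chasles _ _ _ _ _ _ H1 H2) as H.
  match type of H with is_RInt _ _ _ ?v => replace v with 0 in H end.
  exact H. unfold plus; simpl; ring.
Qed.

Definition ind (c t0 : R) (t : R) : R := if Req_EM_T t t0 then c else 0.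

Lemma ind_Xi (c t0 T gamma : R) : -1 <= c <= 1 -> 0 <= gamma -> 0 <= t0 <= T ->
  in_Xi T gamma (ind c t0).
Proof.
  intros Hc Hg Ht. split; [|split].
  - intros t _. unfold ind. destruct (Req_EM_T t t0); lra.
  - eexists. apply (point_int _ t0); auto. intros t Hne. unfold ind.
    destruct (Req_EM_T t t0); [contradiction|auto].
  - rewrite (is_RInt_unique _ _ _ 0); [lra|].
    apply (point_int _ t0); auto. intros t Hne. unfold ind.
    destruct (Req_EM_T t t0); [contradiction|]. apply Rabs_R0.
Qed.

Lemma find_k_aux (dt t : R) (n : nat) : 0 < dt -> 0 <= t < INR n * dt ->
  exists k, (1 <= k <= n)%nat /\ INR (k - 1) * dt <= t < INR k * dt.
Proof.
  intros Hdt. induction n as [|n IH]; intros Ht.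
  - simpl in Ht. lra.
  - destruct (Rlt_dec t (INR n * dt)) as [Hl|Hl].
    + destruct IH as [k [Hk Hk2]]; [lra|]. exists k. split; [lia|auto].
    + exists (S n). split; [lia|]. replace (S n - 1)%nat with n by lia. lra.
Qed.

Lemma find_k (K : nat) (dt t : R) : (0 < K)%nat -> 0 < dt -> 0 <= t <= INR K * dt ->
  exists k, (1 <= k <= K)%nat /\ in_period K dt k t.
Proof.
  intros HK Hdt Ht.
  assert (HKm : INR (K - 1) = INR K - 1) by (rewrite minus_INR; simpl; lia || lra).
  destruct (Rlt_dec t (INR K * dt)) as [Hl|Hl].
  - destruct (find_k_aux dt t K) as [k [Hk Hk2]]; [auto|lra|].
    exists k. split; auto. unfold in_period.
    destruct (Nat.ltb_spec k K); [lra|].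
    assert (k = K) by lia. subst k. rewrite HKm in Hk2. lra.
  - exists K. split; [lia|]. unfold in_period. rewrite Nat.ltb_irrefl. lra.
Qed.

Lemma left_in (K : nat) (dt : R) (k : nat) : 0 < dt -> (1 <= k <= K)%nat ->
  in_period K dt k (INR (k - 1) * dt).
Proof.
  intros Hdt Hk. unfold in_period.
  destruct (Nat.ltb_spec k K).
  - split; [lra|]. apply Rmult_lt_compat_r; auto. apply lt_INR. lia.
  - assert (k = K) by lia. subst k. rewrite minus_INR by lia. simpl. lra.
Qed.

Lemma left_range (K : nat) (dt : R) (k : nat) : 0 < dt -> (1 <= k <= K)%nat ->
  0 <= INR (k - 1) * dt <= INR K * dt.
Proof.
  intros Hdt Hk. split.
  - apply Rmult_le_pos; [apply pos_INR|lra].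
  - apply Rmult_le_compat_r; [lra|]. apply le_INR. lia.
Qed.

Theorem proposition5 (K : nat) (dt x_lo x_hi gamma : R)
  (HK : (0 < K)%nat) (Hdt : 0 < dt)
  (Hlo : x_lo <= 0) (Hhi : 0 <= x_hi)
  (Hgamma : 0 <= gamma <= INR K * dt)
  (x0 xu xd : R -> R)
  (Hx0 : piecewise_const K dt (fun _ => True) x0)
  (Hxu : piecewise_const K dt (fun v => 0 <= v) xu)
  (Hxd : piecewise_const K dt (fun v => 0 <= v) xd) :
  ((forall xi, in_Xi (INR K * dt) gamma xi ->
      forall t, 0 <= t <= INR K * dt ->
        power_output (x0 t) (xu t) (xd t) (xi t) <= x_hi)
   <-> (forall k, (1 <= k <= K)%nat -> val_k dt x0 k + val_k dt xu k <= x_hi))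
  /\
  ((forall xi, in_Xi (INR K * dt) gamma xi ->
      forall t, 0 <= t <= INR K * dt ->
        power_output (x0 t) (xu t) (xd t) (xi t) >= x_lo)
   <-> (forall k, (1 <= k <= K)%nat -> val_k dt x0 k - val_k dt xd k >= x_lo)).
Proof.
  destruct Hx0 as [_ C0]. destruct Hxu as [Pu Cu]. destruct Hxd as [Pd Cd].
  split; split.
  - intros H k Hk. unfold val_k.
    pose proof (left_range K dt k Hdt Hk) as Hr.
    generalize (H (ind 1 (INR (k - 1) * dt)) (ind_Xi 1 (INR (k - 1) * dt) (INR K * dt) gamma ltac:(lra) ltac:(lra) Hr) _ Hr).
    unfold power_output, ind, pos_part, neg_part.
    destruct (Req_EM_T _ _); [|congruence].
    rewrite Rmax_left by lra. rewrite Rmax_right by lra. lra.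
  - intros H xi [Hxi _] t Ht.
    destruct (find_k K dt t HK Hdt Ht) as [k [Hk Hp]].
    pose proof (left_in K dt k Hdt Hk) as L.
    pose proof (C0 k Hk _ _ Hp L) as E0.
    pose proof (Cu k Hk _ _ Hp L) as E1.
    generalize (H k Hk). unfold val_k. rewrite <- E0, <- E1.
    generalize (Pu t Ht). generalize (Pd t Ht). generalize (Hxi t Ht).
    unfold power_output, pos_part, neg_part.
    intros Hx Hdd Huu Hh.
    assert (0 <= Rmax (- xi t) 0 * xd t) by
      (apply Rmult_le_pos; [apply Rmax_r|auto]).
    assert (Rmax (xi t) 0 * xu t <= xu t).
    { rewrite <- (Rmult_1_l (xu t)) at 2. apply Rmult_le_compat_r; auto.
      apply Rmax_lub; lra. }
    lra.
  - intros H k Hk. unfold val_k.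
    pose proof (left_range K dt k Hdt Hk) as Hr.
    generalize (H (ind (-1) (INR (k - 1) * dt)) (ind_Xi (-1) (INR (k - 1) * dt) (INR K * dt) gamma ltac:(lra) ltac:(lra) Hr) _ Hr).
    unfold power_output, ind, pos_part, neg_part.
    destruct (Req_EM_T _ _); [|congruence].
    rewrite Rmax_right by lra. rewrite Rmax_left by lra. lra.
  - intros H xi [Hxi _] t Ht.
    destruct (find_k K dt t HK Hdt Ht) as [k [Hk Hp]].
    pose proof (left_in K dt k Hdt Hk) as L.
    pose proof (C0 k Hk _ _ Hp L) as E0.
    pose proof (Cd k Hk _ _ Hp L) as E1.
    generalize (H k Hk). unfold val_k. rewrite <- E0, <- E1.
    generalize (Pu t Ht). generalize (Pd t Ht). generalize (Hxi t Ht).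
    unfold power_output, pos_part, neg_part.
    intros Hx Hdd Huu Hh.
    assert (0 <= Rmax (xi t) 0 * xu t) by
      (apply Rmult_le_pos; [apply Rmax_r|auto]).
    assert (Rmax (- xi t) 0 * xd t <= xd t).
    { rewrite <- (Rmult_1_l (xd t)) at 2. apply Rmult_le_compat_r; auto.
      apply Rmax_lub; lra. }
    lra.
Qed.
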